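(* Define for real $y$ $$rt(y)=1-\int_0^{\pi/2}e^{-y^2\tan s}\,y^2\sec^2 s\,ds,\qquad H_1(y)=1+\int_0^{\pi/2}\left(\frac{y\sec^2 s\, e^{-y\tan s}}{\left(1+e^{-y\tan s}\right)^2}-\frac12 e^{-y^2\tan s}y^2\sec^2 s\right)ds$$ (improper Riemann integrals at $s=\pi/2$). For a positive integer $n$ define $$\sigma_0(n)=\sum_{i=1}^{\infty}rt\!\left(\sin\!\left(\pi\frac{n}{i}\right)\right),\qquad fes(n)=rt\bigl(\sigma_0(n)-2\bigr).$$ Then for every positive integer $n$, $\sigma_0(n)$ equals the number of positive divisors of $n$, and $fes(n)=1$ if $n$ is prime and $fes(n)=0$ otherwise. Moreover, for every real $x$, $$\sum_{i=1}^{\infty}fes(i)\,H_1(x-i)=\pi(x),$$ where $\pi(x)$ denotes the number of primes $p\le x$. *)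

(* Defs.v *)
From Stdlib Require Import Reals Lra ZArith Znumtheory List.
From Coquelicot Require Import Coquelicot.
Open Scope R_scope.

Definition rt (y : R) : R :=
  1 - RInt_gen (fun s => exp (- (y ^ 2 * tan s)) * y ^ 2 * (/ cos s) ^ 2)
                (at_point 0) (at_left (PI / 2)).

Definition H1 (y : R) : R :=
  1 + RInt_gen (fun s => y * (/ cos s) ^ 2 * exp (- (y * tan s))
                           / (1 + exp (- (y * tan s))) ^ 2
                         - / 2 * (exp (- (y ^ 2 * tan s)) * y ^ 2 * (/ cos s) ^ 2))
                (at_point 0) (at_left (PI / 2)).

(* term i (i >= 0) of sigma_0 corresponds to index i+1 >= 1 *)
Definition sigma0_term (n : nat) (i : nat) : R :=
  rt (sin (PI * (INR n / INR (i + 1)))).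

Definition sigma0 (n : nat) : R := Series (sigma0_term n).

Definition fes (n : nat) : R := rt (sigma0 n - 2).

Definition num_divisors (n : nat) : nat :=
  length (filter (fun d => Nat.eqb (n mod d) 0) (seq 1 n)).

Definition is_prime_nat (p : nat) : bool :=
  if prime_dec (Z.of_nat p) then true else false.

(* pi(x) = number of primes p <= x; every such p is < up x, so the range
   0 .. Z.to_nat (up x) - 1 suffices. *)
Definition prime_pi (x : R) : nat :=
  length (filter (fun p => andb (is_prime_nat p) (if Rle_dec (INR p) x then true else false))
                 (seq 0 (Z.to_nat (up x)))).

(* Main.v *)
Require Import Defs.
From Stdlib Require Import Reals Lra ZArith Znumtheory List Lia.
From Coquelicot Require Import Coquelicot.
Open Scope R_scope.

Lemma d1 y s : cos s <> 0 -> is_derive (fun s => - exp(-(y^2 * tan s))) s (exp (- (y ^ 2 * tan s)) * y ^ 2 * (/ cos s) ^ 2).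
Proof. intros H. unfold tan. auto_derive. auto.
  assert (Hs := sin2_cos2 s). unfold Rsqr in Hs.
  change (sin s * / cos s) with (sin s / cos s).
  set (E := exp _). field_simplify_eq; auto.
  transitivity (y^2*E*(sin s*sin s + cos s*cos s)); [ring | rewrite Hs; ring].
Qed.

Lemma d2 y s : cos s <> 0 -> is_derive (fun s => / (1 + exp(-(y * tan s)))) s (y * (/ cos s) ^ 2 * exp (- (y * tan s))
                           / (1 + exp (- (y * tan s))) ^ 2).
Proof. intros H. unfold tan. auto_derive.
  { split; auto. split; auto. pose proof (exp_pos (- (y * (sin s * / cos s)))). lra. }
  assert (Hs := sin2_cos2 s). unfold Rsqr in Hs.
  change (sin s * / cos s) with (sin s / cos s).
  set (E := exp _).
  assert (HE : 1 + E <> 0) by (pose proof (exp_pos (- (y * (sin s / cos s)))); unfold E; lra).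
  field_simplify_eq; auto.
  transitivity (y*E*(sin s*sin s + cos s*cos s)); [ring | rewrite Hs; ring].
Qed.

Lemma tan_lim M : at_left (PI/2) (fun b => M < tan b /\ 0 < b).
Proof.
  pose proof PI_RGT_0. pose proof (atan_bound M).
  assert (Hp : 0 < Rmin (PI/2 - atan M) (PI/2)) by (apply Rmin_glb_lt; lra).
  exists (mkposreal _ Hp). intros u Hb Hu. simpl in Hb.
  unfold ball in Hb; simpl in Hb; unfold AbsRing_ball, abs, minus, plus, opp in Hb; simpl in Hb.
  apply Rabs_lt_between in Hb. 
  pose proof (Rmin_l (PI/2 - atan M) (PI/2)). pose proof (Rmin_r (PI/2 - atan M) (PI/2)).
  split; [|lra].
  rewrite <- (tan_atan M) at 1. apply tan_increasing; lra.
Qed.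

Lemma lim_exp_tan c : 0 < c -> filterlim (fun b => exp (-(c*tan b))) (at_left (PI/2)) (locally 0).
Proof.
  intros Hc P [eps HP].
  change (at_left (PI/2) (fun b => P (exp (-(c*tan b))))).
  apply (filter_imp (fun b => - ln eps / c < tan b /\ 0 < b)); [|apply tan_lim].
  intros b [Hb _]. apply HP.
  unfold ball; simpl; unfold AbsRing_ball, abs, minus, plus, opp; simpl.
  rewrite Ropp_0, Rplus_0_r, Rabs_pos_eq by (left; apply exp_pos).
  rewrite <- (exp_ln eps) by apply cond_pos. apply exp_increasing.
  apply Rmult_lt_compat_l with (r := c) in Hb; auto.
  replace (c * (- ln eps / c)) with (- ln eps) in Hb by (field; lra). lra.
Qed.

Lemma gen_from_prim (h A : R -> R) L :
  (forall b, 0 < b < PI/2 -> is_RInt h 0 b (A b)) ->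
  filterlim A (at_left (PI/2)) (locally L) ->
  is_RInt_gen h (at_point 0) (at_left (PI/2)) L.
Proof.
  intros HI HL P HP.
  specialize (HL P HP).
  apply Filter_prod with (Q := fun a => a = 0) (R := fun b => P (A b) /\ 0 < b /\ b < PI/2).
  - reflexivity.
  - destruct HL as [e1 H1]. destruct (tan_lim 0) as [e2 H2].
    exists (mkposreal _ (Rmin_pos _ _ (cond_pos e1) (cond_pos e2))).
    intros u Hb Hu. simpl in Hb.
    assert (Hb1 : ball (PI/2) e1 u) by (eapply Rlt_le_trans; [apply Hb| apply Rmin_l]).
    assert (Hb2 : ball (PI/2) e2 u) by (eapply Rlt_le_trans; [apply Hb| apply Rmin_r]).
    split; [apply H1; auto|]. split; [apply (H2 u Hb2 Hu)|auto].
  - intros a b -> [HPb Hb]. exists (A b). split; [apply HI; tauto | auto].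
Qed.


Definition f1 (y : R) := fun s => exp (- (y ^ 2 * tan s)) * y ^ 2 * (/ cos s) ^ 2.
Definition g2 (y : R) := fun s => y * (/ cos s) ^ 2 * exp (- (y * tan s)) / (1 + exp (- (y * tan s))) ^ 2.

Lemma cos_pos_in b x : 0 < b < PI/2 -> Rmin 0 b <= x <= Rmax 0 b -> 0 < cos x.
Proof.
  intros Hb Hx. rewrite Rmin_left, Rmax_right in Hx by lra.
  pose proof PI_RGT_0. apply cos_gt_0; lra.
Qed.

Lemma I1fin y b : 0 < b < PI/2 -> is_RInt (f1 y) 0 b (1 - exp(-(y^2*tan b))).
Proof.
  intros Hb.
  assert (H := is_RInt_derive (fun s => -exp(-(y^2*tan s))) (f1 y) 0 b).
  replace (1 - exp(-(y^2*tan b))) with (minus (-exp(-(y^2*tan b))) (-exp(-(y^2*tan 0)))).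
  - apply H.
    + intros x Hx. apply d1. pose proof (cos_pos_in b x Hb Hx). lra.
    + intros x Hx. apply (@ex_derive_continuous R_AbsRing R_NormedModule). pose proof (cos_pos_in b x Hb Hx).
      unfold f1, tan. auto_derive. lra.
  - rewrite tan_0. unfold minus, plus, opp; simpl. 
    rewrite Rmult_0_r, Ropp_0, exp_0. ring.
Qed.

Lemma I2fin y b : 0 < b < PI/2 -> is_RInt (g2 y) 0 b (/ (1 + exp(-(y*tan b))) - /2).
Proof.
  intros Hb.
  assert (H := is_RInt_derive (fun s => / (1 + exp(-(y*tan s)))) (g2 y) 0 b).
  replace (/ (1 + exp(-(y*tan b))) - /2) with (minus (/ (1 + exp(-(y*tan b)))) (/ (1 + exp(-(y*tan 0))))).
  - apply H.
    + intros x Hx. apply d2. pose proof (cos_pos_in b x Hb Hx). lra.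
    + intros x Hx. apply (@ex_derive_continuous R_AbsRing R_NormedModule). pose proof (cos_pos_in b x Hb Hx).
      unfold g2, tan. auto_derive. 
      pose proof (exp_pos (- (y * (sin x * / cos x)))). repeat split; try lra.
      rewrite Rmult_1_r; apply Rmult_integral_contrapositive; split; lra.
  - rewrite tan_0. unfold minus, plus, opp; simpl. 
    rewrite Rmult_0_r, Ropp_0, exp_0. field. pose proof (exp_pos (- (y * tan b))); lra.
Qed.

Lemma comp0 (E : R -> R) (g : R -> R) : filterlim E (at_left (PI/2)) (locally 0) -> @ex_derive R_AbsRing R_NormedModule g 0 ->
  filterlim (fun b => g (E b)) (at_left (PI/2)) (locally (g 0)).
Proof.
  intros HE Hg. eapply filterlim_comp; [apply HE|].
  exact (@ex_derive_continuous R_AbsRing R_NormedModule g 0 Hg).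
Qed.

Lemma I1gen y : y <> 0 -> is_RInt_gen (f1 y) (at_point 0) (at_left (PI/2)) 1.
Proof.
  intros Hy. apply gen_from_prim with (A := fun b => 1 - exp(-(y^2*tan b))).
  - apply I1fin.
  - assert (H : filterlim (fun b => (fun u => 1 - u) (exp(-(y^2*tan b)))) (at_left (PI/2)) (locally ((fun u => 1 - u) 0))).
    { apply comp0.
    + apply lim_exp_tan. rewrite <- Rsqr_pow2; apply Rlt_0_sqr; auto.
    + auto_derive. auto. }
    simpl in H. rewrite Rminus_0_r in H. exact H.
Qed.

Lemma I1gen0 : is_RInt_gen (f1 0) (at_point 0) (at_left (PI/2)) 0.
Proof.
  apply gen_from_prim with (A := fun b => 1 - exp(-(0^2*tan b))).
  - apply I1fin.
  - apply filterlim_ext with (f := fun _ => 0).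
    + intros b. simpl. rewrite !Rmult_0_l, Ropp_0, exp_0. ring.
    + apply filterlim_const.
Qed.

Lemma I2gen_pos y : 0 < y -> is_RInt_gen (g2 y) (at_point 0) (at_left (PI/2)) (/2).
Proof.
  intros Hy. apply gen_from_prim with (A := fun b => / (1 + exp(-(y*tan b))) - /2).
  - apply I2fin.
  - assert (H : filterlim (fun b => (fun u => /(1 + u) - /2) (exp(-(y*tan b)))) (at_left (PI/2)) (locally ((fun u => /(1+u) - /2) 0))).
    { apply (comp0 _ (fun u => /(1+u) - /2)).
    + apply lim_exp_tan. auto.
    + auto_derive. lra. }
    simpl in H. replace (/ (1 + 0) - / 2) with (/2) in H by field. exact H.
Qed.

Lemma I2gen_neg y : y < 0 -> is_RInt_gen (g2 y) (at_point 0) (at_left (PI/2)) (-/2).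
Proof.
  intros Hy. apply gen_from_prim with (A := fun b => / (1 + exp(-(y*tan b))) - /2).
  - apply I2fin.
  - assert (H : filterlim (fun b => (fun u => u/(u+1) - /2) (exp(-((-y)*tan b)))) (at_left (PI/2)) (locally ((fun u => u/(u+1) - /2) 0))).
    { apply (comp0 _ (fun u => u/(u+1) - /2)).
    + apply lim_exp_tan. lra.
    + auto_derive. lra. }
    simpl in H. replace (0 / (0 + 1) - / 2) with (-/2) in H by field.
    eapply filterlim_ext; [|exact H].
    intros b. simpl. 
    assert (He : exp (- (- y * tan b)) * exp (- (y * tan b)) = 1).
    { rewrite <- exp_plus. replace (- (- y * tan b) + - (y * tan b)) with 0 by ring. apply exp_0. }
    pose proof (exp_pos (- (- y * tan b))). pose proof (exp_pos (- (y * tan b))).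
    field_simplify_eq; try lra.
Qed.

Lemma I2gen0 : is_RInt_gen (g2 0) (at_point 0) (at_left (PI/2)) 0.
Proof.
  apply gen_from_prim with (A := fun b => / (1 + exp(-(0*tan b))) - /2).
  - apply I2fin.
  - apply filterlim_ext with (f := fun _ => 0).
    + intros b. rewrite !Rmult_0_l, Ropp_0, exp_0. field.
    + apply filterlim_const.
Qed.

Lemma rt_0 : rt 0 = 1.
Proof.
  assert (H := is_RInt_gen_unique _ _ I1gen0). unfold f1 in H. unfold rt. rewrite H. ring.
Qed.

Lemma rt_nz y : y <> 0 -> rt y = 0.
Proof.
  intros Hy. assert (H := is_RInt_gen_unique _ _ (I1gen y Hy)). unfold f1 in H. unfold rt. rewrite H. ring.
Qed.

Lemma H1gen y L1 L2 : is_RInt_gen (f1 y) (at_point 0) (at_left (PI/2)) L1 ->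
  is_RInt_gen (g2 y) (at_point 0) (at_left (PI/2)) L2 -> H1 y = 1 + (L2 - /2 * L1).
Proof.
  intros HA HB.
  assert (H := is_RInt_gen_minus _ _ _ _ HB (is_RInt_gen_scal _ (/2) _ HA)).
  apply (is_RInt_gen_unique (V:=R_CompleteNormedModule)) in H.
  transitivity (1 + minus L2 (scal (/2) L1)); [| reflexivity].
  rewrite <- H. reflexivity.
Qed.

Lemma H1_val y : H1 y = if Rle_dec 0 y then 1 else 0.
Proof.
  destruct (Rle_dec 0 y) as [Hy|Hy].
  - destruct (Req_dec y 0) as [->|Hn].
    + rewrite (H1gen 0 0 0 I1gen0 I2gen0). ring.
    + rewrite (H1gen y 1 (/2) (I1gen y Hn) (I2gen_pos y ltac:(lra))). field.
  - assert (Hn : y <> 0) by lra.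
    rewrite (H1gen y 1 (-/2) (I1gen y Hn) (I2gen_neg y ltac:(lra))). field.
Qed.

Lemma filter_len0 (f : nat -> bool) l : length (filter f l) = 0%nat <-> (forall x, In x l -> f x = false).
Proof.
  induction l as [|a l IH]; simpl.
  - split; auto. intros _ x [].
  - destruct (f a) eqn:Ha; simpl.
    + split; [discriminate|]. intros H. rewrite (H a (or_introl eq_refl)) in Ha. discriminate.
    + rewrite IH. split.
      * intros H x [<-|Hx]; auto.
      * intros H x Hx; auto.
Qed.

Lemma series_ind (f : nat -> bool) (a : nat -> R) K :
  (forall i, a i = if f (S i) then 1 else 0) -> (forall j, (K <= j)%nat -> f j = false) -> f 0%nat = false ->
  is_series a (INR (length (filter f (seq 0 K)))).
Proof.
  intros Ha Hf H0.
  assert (Hsum : forall m, sum_n a m = INR (length (filter f (seq 0 (S (S m)))))).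
  { induction m as [|m IH].
    - rewrite sum_O, Ha. simpl. rewrite H0. destruct (f 1%nat); reflexivity.
    - rewrite sum_Sn, IH, Ha. rewrite (seq_S (S (S m))), filter_app, length_app, plus_INR.
      unfold plus; simpl. destruct (f (S (S m))); simpl; ring. }
  assert (Hstab : forall d, length (filter f (seq 0 (K + d))) = length (filter f (seq 0 K))).
  { intros d. rewrite seq_app, filter_app, length_app.
    replace (length (filter f (seq (0 + K) d))) with 0%nat; [lia|].
    symmetry. apply filter_len0. intros x Hx. apply in_seq in Hx. apply Hf. lia. }
  intros P HP. exists K. intros m Hm. rewrite Hsum.
  replace (S (S m)) with (K + (S (S m) - K))%nat by lia. rewrite Hstab.
  apply locally_singleton. exact HP.
Qed.

Lemma modZ n d : (0 < d)%nat -> ((n mod d = 0)%nat <-> (Z.of_nat d | Z.of_nat n)%Z).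
Proof.
  intros Hd. rewrite <- Z.mod_divide by lia. rewrite <- Nat2Z.inj_mod. lia.
Qed.

Lemma sin_div n m : (0 < m)%nat -> (sin (PI * (INR n / INR m)) = 0 <-> (n mod m = 0)%nat).
Proof.
  intros Hm. assert (Hm' : INR m <> 0) by (apply not_0_INR; lia).
  split.
  - intros Hs. apply sin_eq_0_0 in Hs. destruct Hs as [k Hk].
    assert (Hk2 : INR n = IZR k * INR m).
    { pose proof PI_RGT_0.
      apply (Rmult_eq_compat_r (INR m / PI)) in Hk. field_simplify in Hk; try lra. }
    rewrite !INR_IZR_INZ, <- mult_IZR in Hk2. apply eq_IZR in Hk2.
    apply modZ; auto. exists k. exact Hk2.
  - intros Hmod. apply Nat.div_exact in Hmod; [|lia].
    apply sin_eq_0_1. exists (Z.of_nat (n / m)). rewrite <- INR_IZR_INZ.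
    rewrite Hmod at 1. rewrite mult_INR. field. auto.
Qed.

Lemma sigma0_term_eq n i : sigma0_term n i = if Nat.eqb (n mod (S i)) 0 then 1 else 0.
Proof.
  unfold sigma0_term. rewrite Nat.add_1_r.
  destruct (Nat.eqb_spec (n mod S i) 0) as [E|E].
  - rewrite (proj2 (sin_div n (S i) ltac:(lia)) E). apply rt_0.
  - apply rt_nz. intros Hs. apply E. apply (sin_div n (S i)); auto. lia.
Qed.

Lemma sigma0_series n : (1 <= n)%nat -> is_series (sigma0_term n) (INR (num_divisors n)).
Proof.
  intros Hn. unfold num_divisors.
  replace (filter (fun d => Nat.eqb (n mod d) 0) (seq 1 n)) with
     (filter (fun d => Nat.eqb (n mod d) 0) (seq 0 (S n))).
  - apply series_ind.
    + intros i. apply sigma0_term_eq.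
    + intros j Hj. rewrite Nat.mod_small by lia. apply Nat.eqb_neq. lia.
    + simpl. destruct n; [lia|reflexivity].
  - simpl. destruct n; [lia|reflexivity].
Qed.

Lemma divisors_prime n : (1 <= n)%nat -> (num_divisors n = 2%nat <-> prime (Z.of_nat n)).
Proof.
  intros Hn. destruct n as [|[|k]]; [lia| |].
  - split; [simpl; discriminate|]. intros Hp. exfalso; apply not_prime_1; exact Hp.
  - unfold num_divisors. rewrite <- prime_alt. unfold prime'.
    change (seq 1 (S (S k))) with (1%nat :: seq 2 (S k)).
    rewrite (seq_S k 2). simpl filter. cbn [length].
    rewrite filter_app, length_app. cbn [filter].
    replace (2+k)%nat with (S (S k)) by lia. rewrite Nat.mod_same by lia. cbn [Nat.eqb length].
    rewrite Nat.add_1_r.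
    split.
    + intros H. injection H as H. rewrite filter_len0 in H.
      split; [lia|]. intros z Hz Hdiv.
      assert (Hz' : z = Z.of_nat (Z.to_nat z)) by lia.
      rewrite Hz' in Hdiv. apply modZ in Hdiv; [|lia].
      specialize (H (Z.to_nat z)). rewrite Hdiv in H. simpl in H.
      assert (Hin : In (Z.to_nat z) (seq 2 k)) by (apply in_seq; lia).
      specialize (H Hin). discriminate.
    + intros [_ H]. rewrite (proj2 (filter_len0 _ _)); [reflexivity|]. intros x Hx. apply in_seq in Hx.
      apply Nat.eqb_neq. intros Hm. apply modZ in Hm; [|lia].
      apply (H (Z.of_nat x)); [lia|exact Hm].
Qed.

Lemma part1 n : (1 <= n)%nat ->
     is_series (sigma0_term n) (INR (num_divisors n)) /\
     sigma0 n = INR (num_divisors n) /\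
     fes n = (if is_prime_nat n then 1 else 0).
Proof.
  intros Hn. pose proof (sigma0_series n Hn) as HS.
  assert (Hs : sigma0 n = INR (num_divisors n)) by (unfold sigma0; apply is_series_unique; exact HS).
  split; [exact HS|]. split; [exact Hs|].
  unfold fes. rewrite Hs. unfold is_prime_nat.
  destruct (prime_dec (Z.of_nat n)) as [Hp|Hp].
  - apply divisors_prime in Hp; auto. rewrite Hp. replace (INR 2 - 2) with 0 by (simpl; ring). apply rt_0.
  - apply rt_nz. intros He. apply Hp. apply divisors_prime; auto.
    apply INR_eq. simpl. lra.
Qed.

Theorem mainTheorem8 :
  (forall n : nat, (1 <= n)%nat ->
     is_series (sigma0_term n) (INR (num_divisors n)) /\
     sigma0 n = INR (num_divisors n) /\
     fes n = (if is_prime_nat n then 1 else 0)) /\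
  (forall x : R,
     is_series (fun i : nat => fes (i + 1) * H1 (x - INR (i + 1))) (INR (prime_pi x))).
Proof.
  split; [exact part1|].
  intros x. unfold prime_pi. apply series_ind.
  - intros i. rewrite Nat.add_1_r. destruct (part1 (S i) ltac:(lia)) as [_ [_ ->]].
    rewrite H1_val.
    destruct (is_prime_nat (S i)); cbn [andb];
    destruct (Rle_dec 0 (x - INR (S i))); destruct (Rle_dec (INR (S i)) x); try lra; ring.
  - intros j Hj. destruct (Rle_dec (INR j) x) as [Hle|Hle]; [|apply Bool.andb_false_r].
    exfalso. apply le_INR in Hj. rewrite INR_IZR_INZ in Hj.
    destruct (archimed x) as [Hu _].
    destruct (Z_le_gt_dec 0 (up x)) as [Hz|Hz].
    + rewrite Z2Nat.id in Hj by lia. lra.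
    + apply Z.gt_lt in Hz. apply IZR_lt in Hz. pose proof (pos_INR j). lra.
  - unfold is_prime_nat. destruct (prime_dec (Z.of_nat 0)) as [Hp|Hp]; [|reflexivity].
    destruct Hp as [Hp _]. simpl in Hp. lia.
Qed.
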